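(* Let $m\in\mathbb Z_+$ and let $J_1\sqcup\cdots\sqcup J_\ell$ be a partition of $[m]$ such that each $J_k$ is a set of contiguous integers and every element of $J_k$ precedes every element of $J_{k+1}$. Let $a_k=\min J_k$, $b_k=\max J_k$, $m_k=|J_k|$. Let $A\in[0,1]^{n\times m}$ have non-decreasing rows and non-decreasing columns, and suppose $\sum_{i=1}^n(A_{i,b_k}-A_{i,a_k})\le\chi$ for each $k\in[\ell]$ and some $\chi\ge0$. Suppose further that there are positive reals $\rho,\rho_1,\dots,\rho_\ell$ and a permutation $\pi$ of $[n]$ such that for every $i\in[n]$: (i) $\sum_{j=1}^m|A_{\pi(i),j}-A_{i,j}|\le\rho$, and (ii) $\sum_{j\in J_k}|A_{\pi(i),j}-A_{i,j}|\le\rho_k$ for each $k\in[\ell]$. Then \[ \sum_{i=1}^n\sum_{j=1}^m(A_{\pi(i),j}-A_{i,j})^2\le2\chi\sum_{k=1}^\ell\rho_k+n\rho\max_{k\in[\ell]}\frac{\rho_k}{m_k}. \] *)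

(* Defs.v *)
From mathcomp Require Import all_boot all_order all_algebra all_fingroup.
Set Implicit Arguments. Unset Strict Implicit. Unset Printing Implicit Defensive.
Import Order.TTheory GRing.Theory Num.Theory.
Local Open Scope ring_scope.

Definition entry (R : ringType) (n m : nat) (A : 'M[R]_(n, m)) (i : 'I_n) (j : nat) : R :=
  match insub j with Some j' => A i j' | None => 0 end.

(* Block k (0-based) is J_k = {c k, ..., c (k+1) - 1} (0-based columns). *)
Definition in_block (c : nat -> nat) (k j : nat) : bool := (c k <= j < c k.+1)%N.

(* Main.v *)
Require Import Defs.
From mathcomp Require Import all_boot all_order all_algebra all_fingroup.
From mathcomp Require Import zify lra.
Import Order.TTheory GRing.Theory Num.Theory.
Local Open Scope ring_scope.

Section Helpers.
Variable R : realFieldType.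

Lemma sum_ord_cond_nat (m a b : nat) (F : nat -> R) :
  (b <= m)%N ->
  \sum_(j < m | (a <= j < b)%N) F j = \sum_(a <= j < b) F j.
Proof.
move=> hbm; rewrite big_mkcond /=.
suff H : forall m', \sum_(j < m') (if (a <= j < b)%N then F j else 0)
                    = \sum_(a <= j < minn b m') F j.
  by rewrite H (minn_idPl hbm).
elim=> [|m' IH]; first by rewrite big_ord0 minn0 big_geq.
rewrite big_ord_recr /= IH.
case: (leqP b m') => hb.
  by rewrite (minn_idPl (leqW hb)) andbF addr0.
rewrite (minn_idPr hb) andbT.
case: (leqP a m') => ha.
  by rewrite /= big_nat_recr.
by rewrite /= addr0 !big_geq // ltnW.
Qed.

Lemma sum_partition (l : nat) (c : nat -> nat) (F : nat -> R) :
  c 0%N = 0%N -> (forall k, (k < l)%N -> (c k <= c k.+1)%N) ->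
  \sum_(0 <= j < c l) F j = \sum_(k < l) \sum_(c k <= j < c k.+1) F j.
Proof.
move=> c0 hc; elim: l hc => [|l IH] hc.
  by rewrite big_ord0 c0 big_geq.
rewrite big_ord_recr /= -IH; last by move=> k hk; apply: hc; apply: leqW.
by rewrite (@big_cat_nat _ _ _ (c l)) // hc.
Qed.

Lemma c_mono l (c : nat -> nat) : (forall k, (k < l)%N -> (c k < c k.+1)%N) ->
  forall k1 k2, (k1 <= k2 <= l)%N -> (c k1 <= c k2)%N.
Proof.
move=> hc k1; elim=> [|k2 IH] h.
  by have -> : k1 = 0%N by lia.
have [->//|h1] : k1 = k2.+1 \/ (k1 <= k2)%N by lia.
have h2 : (k2 < l)%N by lia.
have := hc _ h2; have := IH ltac:(lia); lia.
Qed.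

Lemma le_bigmax0 l (F : nat -> R) k : (k < l)%N ->
  F k <= \big[Num.max/0]_(i < l) F i.
Proof.
move=> hk; rewrite (bigD1 (Ordinal hk)) //= le_max lexx //.
Qed.

End Helpers.

Theorem lemma12 (R : realFieldType) (n m l : nat) (c : nat -> nat)
  (A : 'M[R]_(n, m)) (chi rho : R) (rhok : nat -> R) (pi : 'S_n) :
  (0 < m)%N ->
  c 0%N = 0%N -> c l = m ->
  (forall k, (k < l)%N -> (c k < c k.+1)%N) ->
  (forall i j, A i j \in `[0, 1]) ->
  (forall i (j j' : 'I_m), (j <= j')%N -> A i j <= A i j') ->
  (forall (i i' : 'I_n) j, (i <= i')%N -> A i j <= A i' j) ->
  0 <= chi ->
  (forall k, (k < l)%N ->
     \sum_(i < n) (entry A i (c k.+1).-1 - entry A i (c k)) <= chi) ->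
  0 < rho -> (forall k, (k < l)%N -> 0 < rhok k) ->
  (forall i : 'I_n, \sum_(j < m) `|A (pi i) j - A i j| <= rho) ->
  (forall (i : 'I_n) k, (k < l)%N ->
     \sum_(j < m | in_block c k j) `|A (pi i) j - A i j| <= rhok k) ->
  \sum_(i < n) \sum_(j < m) (A (pi i) j - A i j) ^+ 2
    <= 2 * chi * (\sum_(k < l) rhok k)
       + n%:R * rho * \big[Num.max/0]_(k < l) (rhok k / (c k.+1 - c k)%:R).
Proof.
move=> m0 c0 cl hc hA hrow hcol chi0 hchi rho0 rhok0 hrho hrhok.
set M := \big[Num.max/0]_(k < l) _.
have eE : forall r (j : 'I_m), entry A r j = A r j.
  move=> r j; rewrite /entry; case: insubP => [j' _ /ord_inj -> //|].
  by rewrite ltn_ord.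
have emono : forall r j j', (j <= j')%N -> (j' < m)%N -> entry A r j <= entry A r j'.
  move=> r j j' hjj hj'; have hj : (j < m)%N by lia.
  rewrite -[j]/(nat_of_ord (Ordinal hj)) -[j']/(nat_of_ord (Ordinal hj')) !eE.
  by apply: hrow.
pose D (i : 'I_n) (j : nat) := entry A (pi i) j - entry A i j.
pose V (r : 'I_n) (k : nat) := entry A r (c k.+1).-1 - entry A r (c k).
have cm : forall k, (k < l)%N -> (c k.+1 <= m)%N.
  move=> k hk; rewrite -cl; apply: (@c_mono l c hc); lia.
have rowb : forall r k j, (k < l)%N -> (c k <= j < c k.+1)%N ->
    entry A r (c k) <= entry A r j /\ entry A r j <= entry A r (c k.+1).-1.
  move=> r k j hk hj; have := cm k hk; have := hc k hk.
  by split; apply: emono; lia.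
have V0 : forall r k, (k < l)%N -> 0 <= V r k.
  move=> r k hk; have := cm k hk; have := hc k hk => h1 h2.
  rewrite /V subr_ge0; apply: emono; lia.
have P1 : forall i k j j', (k < l)%N -> (c k <= j < c k.+1)%N ->
    (c k <= j' < c k.+1)%N -> `|D i j| <= `|D i j'| + (V i k + V (pi i) k).
  move=> i k j j' hk hj hj'.
  have [a1 a2] := rowb i k j hk hj; have [b1 b2] := rowb i k j' hk hj'.
  have [c1 c2] := rowb (pi i) k j hk hj; have [d1 d2] := rowb (pi i) k j' hk hj'.
  have n1 := ler_norm (D i j'); have n2 := ler_norm (- D i j'); rewrite normrN in n2.
  rewrite /D /V in n1 n2 *; rewrite ler_norml; apply/andP; split; lra.
have hblk : forall i k, (k < l)%N -> \sum_(c k <= j < c k.+1) `|D i j| <= rhok k.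
  move=> i k hk; rewrite -(@sum_ord_cond_nat _ m) ?cm //.
  rewrite (eq_bigr (fun j : 'I_m => `|A (pi i) j - A i j|)); first exact: hrhok.
  by move=> j _; rewrite /D !eE.
have htot : forall i, \sum_(j < m) `|D i j| <= rho.
  move=> i; rewrite (eq_bigr (fun j : 'I_m => `|A (pi i) j - A i j|)); first exact: hrho.
  by move=> j _; rewrite /D !eE.
have P2 : forall i k j, (k < l)%N -> (c k <= j < c k.+1)%N ->
    `|D i j| <= rhok k / (c k.+1 - c k)%:R + (V i k + V (pi i) k).
  move=> i k j hk hj.
  set W := V i k + V (pi i) k; set mk := (c k.+1 - c k)%N.
  have mk0 : 0 < mk%:R :> R by rewrite ltr0n subn_gt0 hc.
  have h : `|D i j| *+ mk <= rhok k + W *+ mk.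
    have -> : `|D i j| *+ mk = \sum_(c k <= j' < c k.+1) `|D i j| by rewrite sumr_const_nat.
    apply: le_trans (_ : \sum_(c k <= j' < c k.+1) (`|D i j'| + W) <= _).
      by apply: ler_sum_nat => j' hj'; apply: P1.
    by rewrite big_split /= sumr_const_nat lerD2r hblk.
  rewrite -[`|D i j| *+ mk]mulr_natr -[W *+ mk]mulr_natr in h.
  have e : rhok k / mk%:R + W = (rhok k + W * mk%:R) / mk%:R.
    by rewrite mulrDl mulfK // lt0r_neq0.
  by rewrite e (ler_pdivlMr _ _ mk0).
have M0 : 0 <= M.
  rewrite /M; apply: (big_ind (fun x : R => 0 <= x)) => // [x y hx hy|k _].
    by rewrite le_max hx.
  by rewrite divr_ge0 // ltW // rhok0.
have P3 : forall i k, (k < l)%N ->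
    \sum_(c k <= j < c k.+1) (D i j) ^+ 2
      <= (\sum_(c k <= j < c k.+1) `|D i j|) * M + rhok k * (V i k + V (pi i) k).
  move=> i k hk.
  apply: le_trans (_ : \sum_(c k <= j < c k.+1)
      (`|D i j| * M + `|D i j| * (V i k + V (pi i) k)) <= _).
    apply: ler_sum_nat => j hj.
    rewrite -real_normK ?num_real // expr2 -mulrDr; apply: ler_wpM2l => //.
    apply: le_trans (P2 i k j hk hj) _; rewrite lerD2r.
    exact: (@le_bigmax0 _ l (fun k => rhok k / (c k.+1 - c k)%:R)).
  rewrite big_split /= -!mulr_suml lerD2l; apply: ler_wpM2r; last exact: hblk.
  by rewrite addr_ge0 // V0.
have part : forall (G : nat -> R),
    \sum_(j < m) G j = \sum_(k < l) \sum_(c k <= j < c k.+1) G j.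
  move=> G; rewrite -(big_mkord (fun _ => true) G) -cl sum_partition // => k hk.
  exact: ltnW (hc k hk).
apply: le_trans (_ : \sum_(i < n) \sum_(k < l)
   ((\sum_(c k <= j < c k.+1) `|D i j|) * M + rhok k * (V i k + V (pi i) k)) <= _).
  apply: ler_sum => i _.
  rewrite (eq_bigr (fun j : 'I_m => D i j ^+ 2)); last by move=> j _; rewrite /D !eE.
  rewrite (part (fun j => D i j ^+ 2)); apply: ler_sum => k _; exact: P3.
apply: le_trans (_ : \sum_(i < n) (rho * M +
   \sum_(k < l) rhok k * (V i k + V (pi i) k)) <= _).
  apply: ler_sum => i _.
  rewrite big_split /= -mulr_suml -(part (fun j => `|D i j|)) lerD2r; apply: ler_wpM2r => //.
rewrite big_split /= sumr_const card_ord exchange_big /= addrC.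
apply: lerD; last by rewrite -mulrA mulr_natl.
rewrite mulr_sumr; apply: ler_sum => k _.
rewrite -mulr_sumr [2 * chi * _]mulrC; apply: ler_wpM2l.
  exact: ltW (rhok0 _ (ltn_ord k)).
rewrite big_split /=.
have -> : \sum_(i < n) V (pi i) k = \sum_(i < n) V i k
  by rewrite [RHS](reindex_inj (@perm_inj _ pi)).
have h : \sum_(i < n) V i k <= chi := hchi k (ltn_ord k).
lra.
Qed.
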